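(* Let $\eta>0$, $T>0$, $\beta\in[0,+\infty]$, $\theta>0$, $v>0$. Let $u$ be any real number if $\beta=+\infty$ and $u=-v\beta$ otherwise. Write $\omega=W(\theta v\eta^2T)$ and define $k_\beta:\mathbb R\to\mathbb R$ by $$k_\beta(z)=\theta\left(u+ve^{\eta\sqrt Tz}\right)1_{z\le\frac{\ln\beta}{\eta\sqrt T}}+\frac{z^2}{2}$$ (conventions $\ln(+\infty)=+\infty$, $\ln0=-\infty$), and $$m(\beta)=\begin{cases}-\frac{\omega}{\eta\sqrt T}&\text{if }\beta\in\left[\frac1{\theta v}\left(\frac{\omega}{\eta^2T}+\frac{\omega^2}{2\eta^2T}\right),+\infty\right],\\0&\text{otherwise.}\end{cases}$$ Then $k_\beta$ attains its minimum value at $m(\beta)$. Moreover, if $\beta<+\infty$, $$k_\beta(m(\beta))=-\left(\theta v\beta-\frac{\omega}{\eta^2T}-\frac{\omega^2}{2\eta^2T}\right)_+,$$ and $$k_{+\infty}(m(+\infty))=\frac{\omega}{\eta^2T}+\frac{\omega^2}{2\eta^2T}+\theta u.$$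
   Context: The Lambert function $W$ is the inverse of the bijection $x\in(-1,+\infty)\mapsto xe^x\in(-1/e,+\infty)$; $x_+=\max(x,0)$. *)

(* Defs.v *)
From Stdlib Require Import Reals Lra ClassicalEpsilon.
From Coquelicot Require Import Coquelicot.
Open Scope R_scope.

(* Lambert W: inverse of x in [-1,+oo) |-> x e^x, onto [-1/e,+oo).
   For y >= -1/e, LambertW y is the unique x >= -1 with x e^x = y
   (chosen by Hilbert's epsilon; unspecified outside the domain). *)
Definition LambertW (y : R) : R :=
  epsilon (inhabits 0) (fun x => -1 <= x /\ x * exp x = y).

(* indicator of { z <= ln beta / (eta sqrt T) }, with ln(+oo) = +oo, ln 0 = -oo *)
Definition ind_beta (eta T : R) (beta : Rbar) (z : R) : R :=
  match beta with
  | p_infty => 1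
  | m_infty => 0
  | Finite b =>
      if Rlt_dec 0 b then (if Rle_dec z (ln b / (eta * sqrt T)) then 1 else 0)
      else 0
  end.

Definition k_beta (eta T theta u v : R) (beta : Rbar) (z : R) : R :=
  theta * (u + v * exp (eta * sqrt T * z)) * ind_beta eta T beta z + z ^ 2 / 2.

Definition m_beta (eta T theta v : R) (beta : Rbar) : R :=
  let w := LambertW (theta * v * eta ^ 2 * T) in
  if Rbar_le_dec (Finite (/ (theta * v) * (w / (eta ^ 2 * T) + w ^ 2 / (2 * eta ^ 2 * T)))) beta
  then - w / (eta * sqrt T) else 0.

(* Main.v *)
Require Import Defs.
From Stdlib Require Import Reals Lra Psatz ClassicalEpsilon.
From Coquelicot Require Import Coquelicot.
Open Scope R_scope.

Lemma W_spec y : 0 < y -> 0 < LambertW y /\ LambertW y * exp (LambertW y) = y.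
Proof.
  intros Hy.
  assert (Hex : exists x, -1 <= x /\ x * exp x = y).
  { destruct (IVT (fun x => x * exp x - y) 0 y) as [x [Hx1 Hx2]].
    - apply continuity_minus.
      + apply continuity_mult.
        * apply derivable_continuous, derivable_id.
        * apply derivable_continuous, derivable_exp.
      + apply continuity_const; intros ? ?; reflexivity.
    - lra.
    - rewrite exp_0; lra.
    - pose proof (exp_ineq1 y). assert (1 + y < exp y) by (apply H; lra). nra.
    - exists x; split; lra. }
  pose proof (epsilon_spec (inhabits 0) (fun x => -1 <= x /\ x * exp x = y) Hex) as [H1 H2].
  fold (LambertW y) in H1, H2.
  split; auto.
  destruct (Rle_lt_dec (LambertW y) 0) as [Hle|]; auto.
  pose proof (exp_pos (LambertW y)). nra.
Qed.

Lemma keyineq a c w z : 0 < a -> 0 < c -> 0 < w -> w * exp w = a * (c*c) ->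
  w/(c*c) + w^2/(2*(c*c)) <= a * exp (c*z) + z^2/2.
Proof.
  intros Ha Hc Hw Hwe.
  assert (He : a * exp (-w) = w/(c*c)).
  { assert (exp w * exp (-w) = 1) by (rewrite <- exp_plus; replace (w + - w) with 0 by ring; apply exp_0).
    apply (Rmult_eq_reg_l (c*c)); [|nra]. transitivity (a*(c*c)*exp(-w)); [ring|]. rewrite <- Hwe. field_simplify; [|nra]. replace (w*exp w*exp(-w)) with (w*(exp w*exp(-w))) by ring. rewrite H. ring. }
  assert (exp (c*z) = exp (-w) * exp (c*z + w)) by (rewrite <- exp_plus; f_equal; ring).
  rewrite H.
  pose proof (exp_ineq1_le (c*z+w)).
  pose proof (exp_pos (-w)).
  assert (a * exp (-w) * exp (c*z+w) >= w/(c*c) * (1 + (c*z+w))).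
  { rewrite He. apply Rle_ge, Rmult_le_compat_l; auto. apply Rlt_le, Rdiv_lt_0_compat; nra. }
  assert (w/(c*c) * (1 + (c*z+w)) + z^2/2 - (w/(c*c) + w^2/(2*(c*c))) = (z + w/c)^2/2).
  { field. lra. }
  assert (0 <= (z + w/c)^2/2) by (apply Rmult_le_pos; [apply pow2_ge_0| lra]).
  lra.
Qed.

Lemma keyeq a c w : 0 < a -> 0 < c -> 0 < w -> w * exp w = a * (c*c) ->
  a * exp (c*(-w/c)) + (-w/c)^2/2 = w/(c*c) + w^2/(2*(c*c)).
Proof.
  intros Ha Hc Hw Hwe.
  assert (He : a * exp (-w) = w/(c*c)).
  { assert (exp w * exp (-w) = 1) by (rewrite <- exp_plus; replace (w + - w) with 0 by ring; apply exp_0).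
    apply (Rmult_eq_reg_l (c*c)); [|nra]. transitivity (a*(c*c)*exp(-w)); [ring|]. rewrite <- Hwe. field_simplify; [|nra]. replace (w*exp w*exp(-w)) with (w*(exp w*exp(-w))) by ring. rewrite H. ring. }
  replace (c*(-w/c)) with (-w) by (field; lra). rewrite He. field. lra.
Qed.
Theorem lemma4 (eta T theta v : R) (beta : Rbar) (u : R)
  (Heta : 0 < eta) (HT : 0 < T) (Htheta : 0 < theta) (Hv : 0 < v)
  (Hbeta : Rbar_le (Finite 0) beta)
  (Hu : forall b : R, beta = Finite b -> u = - v * b) :
  let w := LambertW (theta * v * eta ^ 2 * T) in
  let m := m_beta eta T theta v beta in
  (forall z : R, k_beta eta T theta u v beta m <= k_beta eta T theta u v beta z) /\
  (forall b : R, beta = Finite b ->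
     k_beta eta T theta u v beta m =
       - Rmax 0 (theta * v * b - w / (eta ^ 2 * T) - w ^ 2 / (2 * eta ^ 2 * T))) /\
  (beta = p_infty ->
     k_beta eta T theta u v beta m =
       w / (eta ^ 2 * T) + w ^ 2 / (2 * eta ^ 2 * T) + theta * u).
Proof.
  intros w m.
  assert (Hs : 0 < sqrt T) by (apply sqrt_lt_R0; lra).
  assert (HsT := sqrt_sqrt T (Rlt_le _ _ HT)).
  assert (Hc2 : eta^2*T = (eta*sqrt T)*(eta*sqrt T)).
  { transitivity (eta^2 * (sqrt T * sqrt T)); [rewrite HsT; reflexivity | ring]. }
  assert (Hc2' : 2*eta^2*T = 2*((eta*sqrt T)*(eta*sqrt T))) by (rewrite <- Hc2; ring).
  assert (Harg : theta*v*eta^2*T = (theta*v)*((eta*sqrt T)*(eta*sqrt T))) by (rewrite <- Hc2; ring).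
  assert (Hw0 : 0 < theta*v*eta^2*T) by (rewrite Harg; repeat apply Rmult_lt_0_compat; auto).
  destruct (W_spec _ Hw0) as [Hw Hwe].
  fold w in Hw, Hwe. rewrite Harg in Hwe.
  subst m. unfold m_beta. cbv zeta. fold w.
  rewrite Hc2, Hc2'.
  unfold k_beta, ind_beta.
  set (c := eta * sqrt T) in *.
  set (a := theta * v) in *.
  assert (Hc : 0 < c) by (unfold c; nra).
  assert (Ha : 0 < a) by (unfold a; nra).
  set (K := w / (c*c) + w^2/(2*(c*c))) in *.
  assert (HE : forall z, K <= a * exp (c*z) + z^2/2) by (intro z; apply keyineq; auto).
  assert (HE0 : a * exp (c*(-w/c)) + (-w/c)^2/2 = K) by (apply keyeq; auto).
  assert (HK : 0 < K) by (unfold K; apply Rplus_lt_0_compat; apply Rdiv_lt_0_compat; nra).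
  assert (Hthr : / a * K * a = K) by (field; lra).
  assert (Hthr0 : 0 < / a * K) by (apply Rmult_lt_0_compat; [apply Rinv_0_lt_compat|]; lra).
  assert (Hrw : forall x, theta*(u+v*x)*1 = theta*u + a*x) by (intros; unfold a; ring).
  assert (HKc : K*(c*c) = w + w^2/2) by (unfold K; field; lra).
  assert (Hexpw : 1 + w < exp w) by (apply exp_ineq1; lra).
  assert (HKa : K < a).
  { apply (Rmult_lt_reg_r (c*c)); [nra|]. rewrite HKc, <- Hwe. nra. }
  destruct beta as [b| |]; [| |destruct Hbeta].
  - specialize (Hu b eq_refl). subst u. simpl in Hbeta.
    assert (Hrw' : forall x y, theta*(-v*b + v*x)*y = (a*x - a*b)*y) by (intros; unfold a; ring).
    rewrite !Hrw'.
    destruct (Rlt_dec 0 b) as [Hb|Hb].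
    + destruct (Rbar_le_dec (/ a * K) b) as [Hge|Hlt].
      * simpl in Hge. assert (HabK : K <= a*b).
        { rewrite <- Hthr. rewrite (Rmult_comm a b). apply Rmult_le_compat_r; lra. }
        assert (Hew : a * exp (-w) <= a * b).
        { replace (c * (-w/c)) with (-w) in HE0 by (field; lra).
          assert (0 <= (-w/c)^2/2) by (apply Rmult_le_pos; [apply pow2_ge_0|lra]). repeat rewrite Hrw'; lra. }
        assert (Hew' : exp (-w) <= b) by (apply (Rmult_le_reg_l a); lra).
        assert (Hln : -w <= ln b).
        { rewrite <- (ln_exp (-w)). destruct (Req_dec (exp (-w)) b) as [E|E].
          - rewrite E; lra.
          - left; apply ln_increasing; [apply exp_pos|lra]. }
        assert (Hml : -w/c <= ln b / c).
        { unfold Rdiv; apply Rmult_le_compat_r; [left; apply Rinv_0_lt_compat|]; lra. }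
        destruct (Rle_dec (-w/c) (ln b / c)) as [_|N]; [|contradiction].
        split; [|split].
        -- intro z. specialize (HE z).
           destruct (Rle_dec z (ln b / c)); [idtac|].
           { repeat rewrite Hrw'; lra. }
           assert (0 <= z^2/2) by (apply Rmult_le_pos; [apply pow2_ge_0|lra]). repeat rewrite Hrw'; lra.
        -- intros b' E; injection E; intros <-. rewrite Rmax_right; [|unfold K in HabK; lra].
           unfold K in HE0; lra.
        -- intros E; discriminate.
      * simpl in Hlt. assert (Hb1 : b < 1).
        { assert (/a * K < 1).
          { apply (Rmult_lt_reg_r a); [lra|]. rewrite Hthr; lra. }
          lra. }
        assert (Hlnb : ln b < 0) by (rewrite <- ln_1; apply ln_increasing; lra).
        assert (HL : ln b / c < 0).
        { unfold Rdiv. assert (0 < / c) by (apply Rinv_0_lt_compat; lra). nra. }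
        destruct (Rle_dec 0 (ln b / c)) as [N|_]; [lra|].
        assert (HabK : a * b < K).
        { assert (b < /a*K) by (apply Rnot_le_lt; exact Hlt).
          rewrite <- Hthr. rewrite (Rmult_comm a b). apply Rmult_lt_compat_r; lra. }
        split; [|split].
        -- intro z. specialize (HE z).
           assert (0 <= z^2/2) by (apply Rmult_le_pos; [apply pow2_ge_0|lra]).
           destruct (Rle_dec z (ln b / c)); repeat rewrite Hrw'; lra.
        -- intros b' E; injection E; intros <-. rewrite Rmax_left; [|unfold K in HabK; lra].
           lra.
        -- intros E; discriminate.
    + assert (Hb0 : b = 0) by lra. subst b.
      destruct (Rbar_le_dec (/ a * K) 0) as [Hge|Hlt]; [simpl in Hge; lra|].
      split; [|split].
      -- intro z. assert (0 <= z^2/2) by (apply Rmult_le_pos; [apply pow2_ge_0|lra]). repeat rewrite Hrw'; lra.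
      -- intros b' E; injection E; intros <-. rewrite Rmax_left; [|unfold K in HK; lra]. lra.
      -- intros E; discriminate.
  - destruct (Rbar_le_dec (/ a * K) p_infty) as [_|N]; [|exfalso; apply N; exact I].
    rewrite !Hrw. split; [|split].
    + intro z. specialize (HE z). repeat rewrite Hrw; lra.
    + intros b E; discriminate.
    + intros _. lra.
Qed.
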